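(* Let $G$ and $H$ be finite isoclinic groups. If $G$ is a GVZ-group, then $H$ is a GVZ-group; and if $G$ is a nested GVZ-group, then $H$ is a nested GVZ-group.
   Context: Two finite groups $G,H$ are isoclinic if there are isomorphisms $\theta:G/Z(G)\to H/Z(H)$ and $\phi:G'\to H'$ such that for all $g_1,g_2\in G$, whenever $h_1\in\theta(g_1Z(G))$ and $h_2\in\theta(g_2Z(G))$, one has $\phi([g_1,g_2])=[h_1,h_2]$, where $[g,h]=g^{-1}h^{-1}gh$ and $G'=[G,G]$. For $\chi\in\operatorname{Irr}(G)$ (irreducible complex characters), $Z(\chi)=\{g\in G:|\chi(g)|=\chi(1)\}$. $G$ is a GVZ-group if every $\chi\in\operatorname{Irr}(G)$ satisfies $\chi(g)=0$ for all $g\in G\setminus Z(\chi)$. $G$ is nested if for all $\chi,\psi\in\operatorname{Irr}(G)$, $Z(\chi)\subseteq Z(\psi)$ or $Z(\psi)\subseteq Z(\chi)$; a nested GVZ-group is a nested group that is a GVZ-group. *)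

(* Defs.v *)
From mathcomp Require Import all_boot all_order all_algebra all_fingroup all_solvable all_field all_character.
Set Implicit Arguments. Unset Strict Implicit. Unset Printing Implicit Defensive.
Import GRing.Theory Num.Theory.
Local Open Scope group_scope.

(* Isoclinism: isomorphisms theta : G/Z(G) -> H/Z(H) and phi : G' -> H'
   compatible with commutators. [~ x, y] = x^-1 * y^-1 * x * y in MathComp. *)
Definition isoclinic (gT hT : finGroupType) (G : {group gT}) (H : {group hT}) : Prop :=
  exists (theta : {morphism G / 'Z(G) >-> coset_of 'Z(H)})
         (phi : {morphism G^`(1) >-> hT}),
    [/\ isom (G / 'Z(G)) (H / 'Z(H)) theta,
        isom G^`(1) H^`(1) phi &
        forall g1 g2 h1 h2, g1 \in G -> g2 \in G -> h1 \in H -> h2 \in H ->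
          coset 'Z(H) h1 = theta (coset 'Z(G) g1) ->
          coset 'Z(H) h2 = theta (coset 'Z(G) g2) ->
          phi [~ g1, g2] = [~ h1, h2]].

Definition Zchi (gT : finGroupType) (G : {group gT}) (i : Iirr G) : {set gT} :=
  [set g in G | (`|'chi[G]_i g| == 'chi[G]_i 1%g)%R].

Definition GVZ (gT : finGroupType) (G : {group gT}) : Prop :=
  forall (i : Iirr G) (g : gT), g \in G -> g \notin Zchi i -> ('chi[G]_i g = 0)%R.

Definition nested (gT : finGroupType) (G : {group gT}) : Prop :=
  forall i j : Iirr G, (Zchi i \subset Zchi j) \/ (Zchi j \subset Zchi i).

Definition nested_GVZ (gT : finGroupType) (G : {group gT}) : Prop :=
  nested G /\ GVZ G.

(* Main.v *)
Require Import Defs.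
From mathcomp Require Import all_boot all_order all_algebra all_fingroup all_solvable all_field all_character.
From mathcomp Require Import zify.
Set Implicit Arguments. Unset Strict Implicit. Unset Printing Implicit Defensive.
Import GRing.Theory Num.Theory.
Local Open Scope group_scope.
Local Open Scope ring_scope.

Section Gr.
Set Warnings "-notation-overridden -ambiguous-paths".
Variables (gT : finGroupType) (G : {group gT}).

Lemma Zchi_cfcenter i : Zchi i = ('Z('chi[G]_i))%CF.
Proof.
apply/setP=> g; rewrite inE; case Gg: (g \in G) => /=; first by rewrite irr_cfcenterE.
by apply/esym; apply: contraFF Gg => /(subsetP (cfcenter_sub _)).
Qed.

Lemma Zchi_comm i g : g \in G ->
  (g \in Zchi i) = ([~: [set g], G] \subset cfker 'chi[G]_i).
Proof.
move=> Gg; rewrite Zchi_cfcenter.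
have nsKZ := cfker_center_normal 'chi[G]_i.
rewrite -(quotientGK nsKZ) cfcenter_eq_center.
have nKg : g \in 'N(cfker 'chi[G]_i) by rewrite (subsetP (cfker_norm _)).
rewrite morphpreE in_setI nKg [_ \in _ @^-1: _]inE /= /center in_setI mem_quotient //=.
rewrite -sub1set -quotient_set1 // quotient_cents2 ?sub1set ?cfker_norm //.
Qed.

Definition Cg g := commg_set [set g] G.
Definition Ng g := [~: [set g], G].

Lemma Ng_normal g : g \in G -> Ng g <| G.
Proof.
move=> Gg; rewrite /normal commg_normr andbT.
apply: subset_trans (der_sub 1 G); rewrite derg1.
by apply: commgSS; rewrite ?sub1set.
Qed.

Lemma key g : g \in G ->
  (#|'C_G[g]|%:R : algC) = #|(G / Ng g)%g|%:R +
     \sum_(i | ~~ (Ng g \subset cfker 'chi[G]_i)) `|'chi[G]_i g| ^+ 2.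
Proof.
move=> Gg; have nsNG := Ng_normal Gg.
move: (second_orthogonality_relation g Gg); rewrite mulrb class_refl => <-.
rewrite -(eq_bigr _ (fun _ _ => normCK _)).
rewrite (bigID (fun i => Ng g \subset cfker 'chi[G]_i)) /=; congr (_ + _).
have GNg : coset (Ng g) g \in (G / Ng g)%g by apply: mem_quotient.
rewrite -sum_norm_irr_quo //.
move: (second_orthogonality_relation (coset (Ng g) g) GNg).
rewrite mulrb class_refl => E.
transitivity (#|'C_(G / Ng g)[coset (Ng g) g]|%:R : algC).
  by rewrite -E; apply: eq_bigr => i _; rewrite normCK.
have nNg : g \in 'N(Ng g) by rewrite (subsetP (normal_norm nsNG)).
rewrite (setIidPl _) //.
rewrite sub_cent1.
have := quotient_cents2r (subxx (Ng g)); rewrite quotient_set1 // sub1set.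
by apply.
Qed.

Lemma card_Cg g : g \in G -> #|Cg g| = #|g ^: G|.
Proof.
move=> Gg; have -> : Cg g = (mulg (g^-1)%g) @: (g ^: G).
  apply/setP=> z; apply/imset2P/imsetP.
    by case=> x y /set1P -> Gy ->; exists (g ^ y)%g; rewrite ?memJ_class.
  case=> _ /imsetP[y Gy ->] ->; exists g y; rewrite ?set11 //.
by rewrite card_imset //; apply: mulgI.
Qed.

Lemma card_eq g : g \in G ->
  (#|'C_G[g]| == #|(G / Ng g)%g|)%N = (#|Cg g| == #|Ng g|)%N.
Proof.
move=> Gg; have nsNG := Ng_normal Gg; have [sNG nNG] := andP nsNG.
rewrite card_Cg // -index_cent1 card_quotient //.
have E1 := Lagrange (subsetIl G 'C[g]).
have E2 := Lagrange sNG.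
have p1 := cardG_gt0 ('C_G[g])%G; have p2 := cardG_gt0 (Ng g)%G.
move: E1 E2 p1 p2 => /=.
set a := #|'C_G[g]|; set b := #|G : 'C_G[g]|; set c := #|Ng g|; set d := #|G : Ng g|.
move=> E1 E2 p1 p2.
apply/eqP/eqP => E; nia.
Qed.

Lemma GVZ_card : GVZ G <-> (forall g, g \in G -> #|Cg g| = #|Ng g|).
Proof.
split=> [gvz g Gg | Hc i g Gg notZ].
  apply/eqP; rewrite -card_eq //; rewrite -(eqr_nat algC) key //.
  rewrite big1 ?addr0 // => i; rewrite -Zchi_comm // => /gvz -> //.
  by rewrite normr0 expr0n.
have := key Gg; move/eqP: (Hc g Gg); rewrite -card_eq // => /eqP ->.
move=> /(congr1 (fun t => t - #|(G / Ng g)%g|%:R)); rewrite addrAC subrr add0r => /esym S0.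
have HH := psumr_eq0P (fun j _ => exprn_ge0 2 (normr_ge0 ('chi[G]_j g))) S0.
have : `|'chi[G]_i g| ^+ 2 = 0 by apply: HH; rewrite -Zchi_comm.
by move/eqP; rewrite expf_eq0 normr_eq0 => /andP[_ /eqP].
Qed.

Lemma sep_irr (N : {group gT}) (M : {set gT}) : N <| G -> ~~ (M \subset N) ->
  exists i, (N \subset cfker 'chi[G]_i) && ~~ (M \subset cfker 'chi[G]_i).
Proof.
move=> nsN nMN; apply/existsP; apply: contraR nMN.
rewrite negb_exists => /forallP HH.
rewrite -(cap_cfker_normal nsN); apply/bigcapsP => i Ni.
by move: (HH i); rewrite Ni /= negbK.
Qed.

Lemma Zchi_sub (i : Iirr G) : Zchi i \subset G.
Proof. by apply/subsetP => x; rewrite inE => /andP[]. Qed.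

Lemma nested_chain : nested G <->
  (forall g1 g2, g1 \in G -> g2 \in G -> Ng g1 \subset Ng g2 \/ Ng g2 \subset Ng g1).
Proof.
split=> [nG g1 g2 G1 G2 | ch i j].
  case: (boolP (Ng g1 \subset Ng g2)) => [|n12]; first by left.
  case: (boolP (Ng g2 \subset Ng g1)) => [|n21]; first by right.
  have [i /andP[Ni nMi]] := sep_irr (Ng_normal G1) n21.
  have [j /andP[Nj nMj]] := sep_irr (Ng_normal G2) n12.
  have Z1i : g1 \in Zchi i by rewrite Zchi_comm.
  have Z2j : g2 \in Zchi j by rewrite Zchi_comm.
  have nZ2i : g2 \notin Zchi i by rewrite Zchi_comm.
  have nZ1j : g1 \notin Zchi j by rewrite Zchi_comm.
  case: (nG i j) => /subsetP S.
    by rewrite S in nZ1j.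
  by rewrite S in nZ2i.
case: (boolP (Zchi i \subset Zchi j)) => [|/subsetPn[h1 Z1i nZ1j]]; first by left.
right; apply/subsetP => h2 Z2j; apply/idPn => nZ2i.
have G1 := subsetP (Zchi_sub i) _ Z1i.
have G2 := subsetP (Zchi_sub j) _ Z2j.
move: Z1i nZ1j Z2j nZ2i; rewrite !Zchi_comm // => Z1i nZ1j Z2j nZ2i.
case: (ch h1 h2 G1 G2) => S.
  by rewrite (subset_trans S Z2j) in nZ1j.
by rewrite (subset_trans S Z1i) in nZ2i.
Qed.
End Gr.

Theorem theorem1p4 (gT hT : finGroupType) (G : {group gT}) (H : {group hT}) :
  isoclinic G H ->
  (GVZ G -> GVZ H) /\ (nested_GVZ G -> nested_GVZ H).
Proof.
move=> [theta [phi [isoT isoP compat]]].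
have [injT imT] := isomP isoT; have [injP imP] := isomP isoP.
have corrG : forall g, g \in G -> exists2 h, h \in H &
    coset 'Z(H) h = theta (coset 'Z(G) g).
  move=> g Gg.
  have : theta (coset 'Z(G) g) \in (H / 'Z(H))%g.
    by rewrite -imT mem_morphim // mem_quotient.
  by case/morphimP => h _ Hh ->; exists h.
have corrH : forall h, h \in H -> exists2 g, g \in G &
    coset 'Z(H) h = theta (coset 'Z(G) g).
  move=> h Hh.
  have : coset 'Z(H) h \in theta @* (G / 'Z(G))%g by rewrite imT mem_quotient.
  case/morphimP => X _ GX ->.
  by case/morphimP: GX => g _ Gg ->; exists g.
have CgD : forall g, g \in G -> Cg G g \subset G^`(1)%g.
  move=> g Gg; apply/subsetP => z Cz.
  have : z \in Ng G g by rewrite mem_gen.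
  by apply/subsetP; rewrite derg1; apply: commgSS; rewrite ?sub1set.
have NgD : forall g, g \in G -> Ng G g \subset G^`(1)%g.
  by move=> g Gg; rewrite derg1; apply: commgSS; rewrite ?sub1set.
have trC : forall g h, g \in G -> h \in H ->
    coset 'Z(H) h = theta (coset 'Z(G) g) -> phi @: Cg G g = Cg H h.
  move=> g h Gg Hh egh; apply/setP => z; apply/imsetP/imset2P.
    case=> w /imset2P[g' x /set1P -> Gx ->] ->.
    have [y Hy exy] := corrG x Gx.
    by exists h y; rewrite ?set11 // (compat g x h y).
  case=> h' y /set1P -> Hy ->.
  have [x Gx exy] := corrH y Hy.
  exists [~ g, x]%g; first by apply: imset2_f; rewrite ?set11.
  by rewrite (compat g x h y).
have cardC : forall g h, g \in G -> h \in H ->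
    coset 'Z(H) h = theta (coset 'Z(G) g) -> #|Cg H h| = #|Cg G g|.
  move=> g h Gg Hh egh; rewrite -(trC g h Gg Hh egh) card_in_imset //.
  by apply: sub_in2 (injmP injP) => z; apply/subsetP; apply: CgD.
have trN : forall g h, g \in G -> h \in H ->
    coset 'Z(H) h = theta (coset 'Z(G) g) -> phi @* Ng G g = Ng H h.
  move=> g h Gg Hh egh.
  rewrite /Ng /commutator morphim_gen ?CgD // morphimEsub ?CgD //.
  by rewrite (trC g h Gg Hh egh).
have cardN : forall g h, g \in G -> h \in H ->
    coset 'Z(H) h = theta (coset 'Z(G) g) -> #|Ng H h| = #|Ng G g|.
  by move=> g h Gg Hh egh; rewrite -(trN g h Gg Hh egh) card_injm // NgD.
have gvz : GVZ G -> GVZ H.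
  move/GVZ_card => cG; apply/GVZ_card => h Hh.
  have [g Gg egh] := corrH h Hh.
  by rewrite (cardC g h Gg Hh egh) (cardN g h Gg Hh egh) cG.
split=> // [[nG gG]]; split; last exact: gvz.
apply/nested_chain => h1 h2 H1 H2.
have [g1 G1 e1] := corrH h1 H1; have [g2 G2 e2] := corrH h2 H2.
rewrite -(trN g1 h1 G1 H1 e1) -(trN g2 h2 G2 H2 e2).
have := (nested_chain G).1 nG g1 g2 G1 G2.
by case=> S; [left|right]; apply: morphimS.
Qed.
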